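(* For any compact metric measure space $(X,d_X,\mu_X)$, the eigenvalue $\lambda_1$ of largest absolute value of the distance kernel operator $D^X$ satisfies $|\lambda_1|\le\operatorname{diam}(X)\operatorname{vol}(X)$, and this bound is asymptotically sharp: there exist compact metric measure spaces $X_n$ for which $|\lambda_1(X_n)|/(\operatorname{diam}(X_n)\operatorname{vol}(X_n))\to1$.
   Context: A metric measure space carries a Radon Borel measure $\mu_X$; $\operatorname{vol}(X)=\mu_X(X)$ and $\operatorname{diam}(X)=\sup\{d_X(x,x'):x,x'\in X\}$. The distance kernel operator is $(D^Xf)(x)=\int_X f(y)d_X(x,y)\,d\mu_X(y)$ on $L^2(X,\mu_X)$; its eigenvalues are ordered so that $|\lambda_1|\ge|\lambda_2|\ge\cdots$. *)

(* Defs.v *)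
From HB Require Import structures.
From mathcomp Require Import all_boot all_order all_algebra.
From mathcomp Require Import all_classical all_reals all_analysis.
Set Implicit Arguments. Unset Strict Implicit. Unset Printing Implicit Defensive.
Import Order.TTheory GRing.Theory Num.Theory.
Local Open Scope classical_set_scope.
Local Open Scope ring_scope.

Definition dopen {T : Type} {R : realType} (d : T -> T -> R) (A : set T) : Prop :=
  forall x, A x -> exists e : R, 0 < e /\ forall y, d x y < e -> A y.

Definition dcompact {T : Type} {R : realType} (d : T -> T -> R) : Prop :=
  forall (I : Type) (U : I -> set T), (forall i, dopen d (U i)) ->
    setT `<=` \bigcup_i U i ->
    exists F : set I, finite_set F /\ setT `<=` \bigcup_(i in F) U i.

(* A compact metric measure space: a compact metric space whose measurable
   sets are exactly its Borel sets, with a finite Borel measure (on a compact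
   metric space every finite Borel measure is Radon, and a Radon measure on a
   compact space is finite). *)
Record cmms (R : realType) := CMMS {
  cm_disp : measure_display;
  cm_pt : measurableType cm_disp;
  cm_d : cm_pt -> cm_pt -> R;
  cm_d_ge0 : forall x y, 0 <= cm_d x y;
  cm_d_eq0 : forall x y, cm_d x y = 0 <-> x = y;
  cm_d_sym : forall x y, cm_d x y = cm_d y x;
  cm_d_tri : forall x y z, cm_d x z <= cm_d x y + cm_d y z;
  cm_compact : dcompact cm_d;
  cm_borel : (@measurable _ cm_pt) = <<s [set A | dopen cm_d A] >>;
  cm_mu : {measure set cm_pt -> \bar R};
  cm_mu_fin : (cm_mu setT < +oo)%E
}.


Definition vol {R : realType} (X : cmms R) : R := fine (@cm_mu R X setT).

Definition diam {R : realType} (X : cmms R) : R :=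
  sup [set r : R | exists x y, r = @cm_d R X x y].

Definition isL2 {R : realType} (X : cmms R) (f : cm_pt X -> R) : Prop :=
  measurable_fun setT f /\ (\int[@cm_mu R X]_x ((f x) ^+ 2)%:E < +oo)%E.

Definition distop {R : realType} (X : cmms R) (f : cm_pt X -> R) (x : cm_pt X)
  : \bar R := \int[@cm_mu R X]_y (f y * @cm_d R X x y)%:E.

Definition eigenvalue {R : realType} (X : cmms R) (lam : R) : Prop :=
  exists f : cm_pt X -> R, isL2 f /\
    ~ {ae @cm_mu R X, forall x, f x = 0} /\
    {ae @cm_mu R X, forall x, distop f x = (lam * f x)%:E}.

Definition top_eigenvalue {R : realType} (X : cmms R) (lam : R) : Prop :=
  eigenvalue X lam /\ forall mu, eigenvalue X mu -> `|mu| <= `|lam|.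

(* Main.v *)
Require Import Defs.
From HB Require Import structures.
From mathcomp Require Import all_boot all_order all_algebra.
From mathcomp Require Import all_classical all_reals all_analysis.
From mathcomp Require Import measurable_realfun.
Import Order.TTheory GRing.Theory Num.Theory numFieldNormedType.Exports.
Local Open Scope classical_set_scope.
Local Open Scope ring_scope.
From mathcomp Require Import lra.

Definition pts (n : nat) := 'I_n.+1.
HB.instance Definition _ n := Finite.on (pts n).
HB.instance Definition _ n := isPointed.Build (pts n) ord0.
HB.instance Definition _ n := @isMeasurable.Build default_measure_display
  (pts n) discrete_measurable discrete_measurable0
  discrete_measurableC discrete_measurableU.

Section finex.
Variable R : realType.
Variable n : nat.
Local Notation T := (pts n).

Definition pmu : {measure set T -> \bar R} :=
  msum (fun i : nat => @dirac _ T (inord i) R) n.+1.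

Lemma meas_all (A : set T) : measurable A.
Proof. by []. Qed.

Lemma mfun_all (f : pts n -> \bar R) : measurable_fun [set: pts n] f.
Proof. by move=> _ B _; exact: meas_all. Qed.

Lemma pmuE (A : set T) : pmu A = (\sum_(i : T) (i \in A)%:R)%:E.
Proof.
rewrite /pmu /= /msum /= sumEFin.
congr (_%:E); apply: eq_bigr => i _ /=; by rewrite inord_val indicE.
Qed.

Lemma ge0_int_pmu (g : T -> \bar R) : (forall x, 0 <= g x)%E ->
  (\int[pmu]_x g x = \sum_(i : T) g i)%E.
Proof.
move=> g0; rewrite ge0_integral_measure_sum//.
apply: eq_bigr => i _; rewrite integral_dirac//.
by rewrite diracT mul1e inord_val.
Qed.

Lemma int_pmu (g : T -> R) :
  (\int[pmu]_x (g x)%:E = (\sum_(i : T) g i)%:E)%E.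
Proof.
rewrite integralE !ge0_int_pmu//.
have E1 i : ((fun x => (g x)%:E)^\+ i)%E = (Num.max (g i) 0)%:E.
  by rewrite funeposE EFin_max.
have E2 i : ((fun x => (g x)%:E)^\- i)%E = (Num.max (- g i) 0)%:E.
  by rewrite funenegE EFin_max.
under eq_bigr do rewrite E1.
under [X in (_ - X)%E]eq_bigr do rewrite E2.
rewrite !sumEFin -EFinB -sumrB; congr (_%:E); apply: eq_bigr => i _.
case: (lerP 0 (g i)) => gi; case: (lerP 0 (- g i)) => gi'.
- have gi0 : g i = 0 by apply/le_anti; rewrite gi andbT -oppr_ge0.
  by rewrite gi0 oppr0 subr0.
- by rewrite subr0.
- by rewrite sub0r opprK.
- by move: gi gi'; rewrite oppr_lt0 => /lt_trans H /H; rewrite ltxx.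
Qed.

Lemma ae_all (P : T -> Prop) : {ae pmu, forall x, P x} -> forall x, P x.
Proof.
move=> [N [mN N0 sub]] x; apply: contrapT => nPx.
have Nx : N x by apply: sub.
move: N0; rewrite pmuE => /(congr1 fine) /= S0.
have := @psumr_eq0P _ _ predT (fun i : T => (i \in N)%:R) _ S0 x.
rewrite mem_set//.
have H : forall i : T, predT i -> 0 <= (i \in N)%:R :> R by move=> i _; rewrite ler0n.
by move=> /(_ H isT) /eqP; rewrite oner_eq0.
Qed.

Lemma pmuT : pmu setT = n.+1%:R%:E.
Proof.
rewrite pmuE; congr (_%:E).
under eq_bigr do rewrite in_setT.
by rewrite sumr_const card_ord.
Qed.

Definition dd (x y : T) : R := if x == y then 0 else 1.

Lemma dd_ge0 x y : 0 <= dd x y.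
Proof. by rewrite /dd; case: ifP. Qed.

Lemma dd_eq0 x y : dd x y = 0 <-> x = y.
Proof.
rewrite /dd; case: eqP => [xy|nxy]; first by split.
by split => // /eqP; rewrite oner_eq0.
Qed.

Lemma dd_sym x y : dd x y = dd y x.
Proof. by rewrite /dd eq_sym. Qed.

Lemma dd_tri x y z : dd x z <= dd x y + dd y z.
Proof.
rewrite /dd; case: (eqVneq x z) => [->|xz]; first by rewrite addr_ge0 ?dd_ge0//; case: ifP; case: ifP.
case: (eqVneq x y) => [<-|xy]; first by rewrite (negbTE xz) add0r.
by rewrite ler_wpDr //; case: ifP.
Qed.

Lemma dd_open (A : set T) : dopen dd A.
Proof.
move=> x Ax; exists 1; split => // y; rewrite /dd; case: eqP => [<-//|_].
by rewrite ltxx.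
Qed.

Lemma dd_compact : dcompact dd.
Proof.
move=> I U _ cov.
have /choice [f fP] : forall x : T, exists i, U i x.
  by move=> x; have [i _ Uix] := cov x Logic.I; exists i.
exists (range f); split; first exact: finite_image finite_finset.
by move=> x _; exists (f x) => //; exists x.
Qed.

Lemma dd_borel : (@measurable _ T) = <<s [set A | dopen dd A] >>.
Proof.
rewrite eqEsubset; split => A _ //.
by apply: sub_sigma_algebra; exact: dd_open.
Qed.

Lemma pmu_fin : (pmu setT < +oo)%E.
Proof. by rewrite pmuT ltry. Qed.

Lemma sum_dd (f : T -> R) x : \sum_y f y * dd x y = \sum_y f y - f x.
Proof.
rewrite [in RHS](bigD1 x)//= [f x + _]addrC addrK (bigD1 x)//= /dd eqxx mulr0 add0r.
by apply: eq_bigr => y /negbTE; rewrite eq_sym => ->; rewrite mulr1.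
Qed.
End finex.

Definition pX (R : realType) (n : nat) : cmms R :=
  @CMMS R default_measure_display (pts n) (@dd R n) (@dd_ge0 R n)
    (@dd_eq0 R n) (@dd_sym R n) (@dd_tri R n) (@dd_compact R n)
    (@dd_borel R n) (@pmu R n) (@pmu_fin R n).

Section pXfacts.
Variable R : realType.
Variable n : nat.
Hypothesis n0 : (0 < n)%N.
Local Notation X := (pX R n).

Lemma vol_pX : vol X = n.+1%:R.
Proof. by rewrite /vol /= pmuT. Qed.

Lemma diam_pX : diam X = 1.
Proof.
rewrite /diam /=.
set E := [set r : R | exists x y, r = @dd R n x y].
have ub : ubound E 1 by move=> r [x [y ->]]; rewrite /dd; case: ifP.
apply/le_anti; rewrite ge_sup //=; last by exists 0, ord0, ord0; rewrite /dd eqxx.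
apply: ub_le_sup; first by exists 1.
exists ord0, ord_max; rewrite /dd; case: eqP => // /(congr1 val) /= n0'.
by move: n0; rewrite -n0'.
Qed.

Lemma distop_pX (f : pts n -> R) x :
  @distop R (pX R n) f x = (\sum_y f y - f x)%:E.
Proof. by rewrite /distop /= int_pmu sum_dd. Qed.

Lemma eig_pX : Defs.eigenvalue X n%:R.
Proof.
exists (fun _ => 1); split; [split|split].
- by move=> _ B _.
- by rewrite /= int_pmu ltry.
- by move=> /ae_all /(_ ord0) /eqP; rewrite oner_eq0.
- apply: aeW => x; rewrite distop_pX sumr_const card_ord mulr1.
  by rewrite -[n.+1]addn1 natrD mulr1n addrK.
Qed.

Lemma eig_bound_pX m : Defs.eigenvalue X m -> `|m| <= n%:R.
Proof.
move=> [f [_ [nz /ae_all eq]]].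
have {}eq x : \sum_y f y = (m + 1) * f x.
  by move: (eq x); rewrite distop_pX => -[] /eqP; rewrite subr_eq mulrDl mul1r => /eqP.
have [x0 fx0] : exists x0, f x0 != 0.
  apply: contrapT => /forallNP H; apply: nz; apply: aeW => x.
  by apply/eqP; rewrite -[_ == _]negbK; apply/negP; exact: H.
have [m1|m1] := eqVneq (m + 1) 0.
  have -> : m = -1 by apply/eqP; rewrite -subr_eq0 opprK m1.
  by rewrite normrN normr1 ler1n.
have fc x : f x = f x0.
  by apply: (mulfI m1); rewrite -!eq.
have : \sum_y f y = n.+1%:R * f x0.
  by under eq_bigr do rewrite fc; rewrite sumr_const card_ord mulr_natl.
rewrite (eq x0) => /(mulIf fx0) /eqP; rewrite -[n.+1]addn1 natrD (inj_eq (addIr 1)) => /eqP ->.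
by rewrite normr_nat.
Qed.

Lemma top_pX : top_eigenvalue X n%:R.
Proof.
split; first exact: eig_pX.
by move=> m /eig_bound_pX; rewrite normr_nat.
Qed.
End pXfacts.

Lemma part2 (R : realType) :
  (exists (X : nat -> cmms R) (lam : nat -> R),
      (forall n, top_eigenvalue (X n) (lam n)) /\
      ((fun n => `|lam n| / (diam (X n) * vol (X n))) @ \oo --> (1 : R))).
Proof.
exists (fun n => pX R n.+1), (fun n => n.+1%:R); split.
  by move=> n; exact: top_pX.
have -> : (fun n => `|n.+1%:R| / (diam (pX R n.+1) * vol (pX R n.+1)))
    = (fun n => 1 - (@harmonic R n.+1)).
  apply/funext => n; rewrite diam_pX// vol_pX// mul1r normr_nat /=.
  rewrite -[n.+2]addn1 natrD.
  have h : (n.+1%:R + 1 : R) != 0 by rewrite natr1 pnatr_eq0.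
  by apply: (mulIf h); rewrite mulrBl divfK// mulVf// mul1r addrK.
rewrite -[X in _ --> X]subr0; apply: cvgB; first exact: cvg_cst.
by rewrite (cvg_shiftS (@harmonic R)); exact: cvg_harmonic.
Qed.

Section part1.
Variable R : realType.
Variable X : cmms R.
Local Notation T := (cm_pt X).
Local Notation d := (@cm_d R X).
Local Notation mu := (@cm_mu R X).

Lemma d_ball_open (p : T) (r : R) : dopen d [set y | d p y < r].
Proof.
move=> y /= hy; exists (r - d p y); split; first by rewrite subr_gt0.
move=> z hz; rewrite /=; have := cm_d_tri p y z; lra.
Qed.

Lemma d_bounded : exists B, forall x y, d x y <= B.
Proof.
pose p : T := point.
have [F [finF cov]] := @cm_compact R X nat (fun i => [set y | d p y < i%:R])
  (fun i => d_ball_open p i%:R) (fun y _ => ex_intro2 _ _ (Num.bound (d p y))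
     Logic.I (archi_boundP (cm_d_ge0 p y))).
pose N := (\max_(i <- finmap.enum_fset (fset_set F)) i)%N.
have hN y : d p y < N%:R.
  have [i Fi hi] := cov y Logic.I.
  apply: (lt_le_trans hi); rewrite ler_nat.
  by apply: (@leq_bigmax_seq _ _ xpredT id); rewrite ?in_fset_set ?inE.
exists (N%:R + N%:R) => x y.
have := cm_d_tri x p y; have := hN x; have := hN y; rewrite (cm_d_sym x p).
lra.
Qed.

Lemma d_le_diam x y : d x y <= diam X.
Proof.
have [B hB] := d_bounded.
apply: ub_le_sup; last by exists x, y.
by exists B => r [a [b ->]].
Qed.

Lemma diam_ge0 : 0 <= diam X.
Proof. exact: le_trans (cm_d_ge0 point point) (d_le_diam _ _). Qed.

Lemma d_meas x : measurable_fun setT (d x).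
Proof.
apply: (measurability (@RGenInftyO.G R)).
  exact: RGenInftyO.measurableE.
move=> _ [_ [r ->] <-].
rewrite cm_borel; apply: sub_sigma_algebra.
rewrite setTI; exact: d_ball_open.
Qed.

Lemma abs_le_sq (a : R) : `|a| <= 1 + a ^+ 2.
Proof.
have h0 := normr_ge0 a; have h2 : `|a| ^+ 2 = a ^+ 2 by rewrite real_normK ?num_real.
rewrite -h2; set b := `|a| in h0 h2 *; nra.
Qed.

Lemma muTE : mu setT = (vol X)%:E.
Proof.
by rewrite /vol fineK// ge0_fin_numE ?measure_ge0 ?cm_mu_fin.
Qed.

Lemma part1 (lam : R) : Defs.eigenvalue X lam -> `|lam| <= diam X * vol X.
Proof.
move=> [f [[mf f2fin] [nz eqae]]].
have mabs : measurable_fun setT (fun x => (`|f x|)%:E).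
  by apply/measurable_EFinP; apply: measurableT_comp => //; exact: normr_measurable.
have mf2 : measurable_fun setT (fun x => (f x ^+ 2)%:E).
  by apply/measurable_EFinP; exact: measurable_funX.
set Ie := (\int[mu]_x (`|f x|)%:E)%E.
have Ie_ge0 : (0 <= Ie)%E by apply: integral_ge0 => x _; rewrite lee_fin.
have Ifin : (Ie < +oo)%E.
  apply: (@le_lt_trans _ _ (\int[mu]_x ((cst 1%:E) x + (f x ^+ 2)%:E))%E).
    apply: ge0_le_integral => //.
    - apply: emeasurable_funD => //; exact: measurable_cst.
    - by move=> x _; rewrite -EFinD lee_fin abs_le_sq.
  rewrite ge0_integralD//; last by move=> x _; rewrite lee_fin sqr_ge0.
  rewrite integral_cst// mul1e; apply: lte_add_pinfty => //.
  exact: cm_mu_fin.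
pose I := fine Ie.
have IeE : Ie = I%:E by rewrite /I fineK// ge0_fin_numE.
have I_ge0 : 0 <= I by rewrite -lee_fin -IeE.
have I_neq0 : I != 0.
  apply/negP => /eqP I0; apply: nz.
  have : (\int[mu]_x `|(f x)%:E| = 0)%E.
    by rewrite -[RHS]/(0%:E) -I0 -IeE; apply: eq_integral => x _; rewrite abse_EFin.
  move/(ae_eq_integral_abs mu measurableT ((measurable_EFinP _ _).2 mf)).
  apply: filterS => x /(_ Logic.I) [].
  by [].
have I_gt0 : 0 < I by rewrite lt_def I_neq0.
have pw : {ae mu, forall x, setT x -> (`|lam|%:E * (`|f x|)%:E <= (diam X * I)%:E)%E}.
  apply: filterS eqae => x hx _.
  rewrite -EFinM -normrM -abse_EFin -hx /distop.
  have mg : measurable_fun setT (fun y => (f y * d x y)%:E).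
    by apply/measurable_EFinP; apply: measurable_funM => //; exact: d_meas.
  apply: (le_trans (le_abse_integral mu measurableT mg)).
  apply: (@le_trans _ _ (\int[mu]_y ((diam X)%:E * (`|f y|)%:E))%E).
    apply: ge0_le_integral => //.
    - apply: measurableT_comp => //; exact: measurable_abse.
    - by apply: emeasurable_funM => //; exact: measurable_cst.
    - move=> y _; rewrite abse_EFin -EFinM lee_fin normrM (ger0_norm (cm_d_ge0 _ _)).
      by rewrite mulrC ler_wpM2r// d_le_diam.
  by rewrite ge0_integralZl_EFin// ?diam_ge0// -/Ie IeE -EFinM.
have key : (\int[mu]_x (`|lam|%:E * (`|f x|)%:E) <=
    \int[mu]_x (cst (diam X * I)%:E) x)%E.
  apply: ae_ge0_le_integral => //.
  - apply: emeasurable_funM => //; exact: measurable_cst.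
  - by move=> x _; rewrite lee_fin mulr_ge0 ?diam_ge0.
have LE : (\int[mu]_x (`|lam|%:E * (`|f x|)%:E) = (`|lam| * I)%:E)%E.
  rewrite ge0_integralZl_EFin//.
  by rewrite -/Ie IeE -EFinM.
move: key; rewrite LE integral_cst// muTE -EFinM lee_fin.
by move=> h; rewrite -(ler_pM2r I_gt0) mulrAC.
Qed.
End part1.

Theorem lemma2p7 (R : realType) :
  (forall (X : cmms R) (lam : R), top_eigenvalue X lam ->
      `|lam| <= diam X * vol X) /\
  (exists (X : nat -> cmms R) (lam : nat -> R),
      (forall n, top_eigenvalue (X n) (lam n)) /\
      ((fun n => `|lam n| / (diam (X n) * vol (X n))) @ \oo --> (1 : R))).
Proof.
split; last exact: part2.
by move=> X lam [e _]; exact: part1 e.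
Qed.
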